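(* Let $A$ and $B$ be rings, $f: A\to B$ a ring homomorphism and $J$ a proper ideal of $B$. Let $S$ be the set of regular central elements of $B$ (central elements that are not zero divisors), and assume $J\cap S\neq\varnothing$. Then $A\bowtie^{f}J$ is a nil-Armendariz ring if and only if both $A$ and $f(A)+J$ are nil-Armendariz rings.
   Context: All rings are associative with identity (not necessarily commutative), ring homomorphisms are unital, and ideals are two-sided. $\mathrm{nil}(R)$ denotes the set of nilpotent elements of a ring $R$, and $\mathrm{nil}(R)[x]$ the set of polynomials all of whose coefficients lie in $\mathrm{nil}(R)$. For a ring homomorphism $f:A\to B$ and an ideal $J$ of $B$, the amalgamation is the subring $A\bowtie^{f}J=\{(a,f(a)+j)\mid a\in A,\ j\in J\}$ of $A\times B$; $f(A)+J=\{f(a)+j: a\in A, j\in J\}$ is a subring of $B$. A ring $R$ is nil-Armendariz if whenever $p(x)=\sum_{i=0}^n a_ix^i$ and $q(x)=\sum_{j=0}^m b_jx^j$ in $R[x]$ satisfy $p(x)q(x)\in\mathrm{nil}(R)[x]$, then $a_ib_j\in\mathrm{nil}(R)$ for all $i,j$. *)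

(* Defs.v *)
From HB Require Import structures.
From mathcomp Require Import all_boot all_order all_algebra.
From Stdlib Require Import ClassicalEpsilon.
Set Implicit Arguments. Unset Strict Implicit. Unset Printing Implicit Defensive.
Import GRing.Theory.
Local Open Scope ring_scope.

Definition nilpotent (R : nzRingType) (x : R) : Prop := exists n : nat, x ^+ n = 0.

(* nil-Armendariz rings: p q in R[x] with p*q in nil(R)[x] implies
   a_i b_j in nil(R) for all i j (coefficients beyond the degree are 0). *)
Definition nil_armendariz (R : nzRingType) : Prop :=
  forall p q : {poly R},
    (forall k : nat, nilpotent (p * q)`_k) ->
    forall i j : nat, nilpotent (p`_i * q`_j).

Record ideal (R : nzRingType) := Ideal {
  ideal_pred :> {pred R};
  ideal0 : 0 \in ideal_pred;
  idealB : forall x y, x \in ideal_pred -> y \in ideal_pred -> x - y \in ideal_pred;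
  idealMl : forall a x, x \in ideal_pred -> a * x \in ideal_pred;
  idealMr : forall a x, x \in ideal_pred -> x * a \in ideal_pred }.

Definition regular_central (R : nzRingType) (s : R) : Prop :=
  (forall b : R, s * b = b * s) /\
  (forall b : R, s * b = 0 -> b = 0) /\ (forall b : R, b * s = 0 -> b = 0).

Definition asbool (P : Prop) : bool :=
  if excluded_middle_informative P then true else false.

Lemma asboolP (P : Prop) : reflect P (asbool P).
Proof. by rewrite /asbool; case: excluded_middle_informative => h; constructor. Qed.

Section Amalgamation.
Variables (A B : nzRingType) (f : {rmorphism A -> B}) (J : ideal B).

(* A ⋈^f J = {(a, f a + j)} as a predicate on A * B *)
Definition amalg_pred : {pred A * B} := [pred x : A * B | x.2 - f x.1 \in J].

Lemma amalg_subring_closed : subring_closed amalg_pred.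
Proof.
have e : forall x y, x \in J -> y \in J -> x + y \in J.
  move=> x y hx hy; rewrite -[y]opprK; apply: idealB => //.
  by rewrite -[- y]sub0r; apply: idealB => //; exact: ideal0.
split.
- by rewrite inE /= rmorph1 subrr ideal0.
- move=> [a b] [a' b']; rewrite !inE /= => h h'.
  have -> : b - b' - f (a - a') = (b - f a) - (b' - f a').
    by rewrite rmorphB !opprB addrACA [RHS]addrACA [- f a + _]addrC.
  exact: idealB.
- move=> [a b] [a' b']; rewrite !inE /= => h h'.
  have -> : b * b' - f (a * a') = (b - f a) * b' + f a * (b' - f a').
    by rewrite rmorphM mulrBl mulrBr addrA subrK.
  by apply: e; [apply: idealMr | apply: idealMl].
Qed.

Record amalg := Amalg { amalg_val : A * B; amalg_valP : amalg_val \in amalg_pred }.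
HB.instance Definition _ := [isSub for amalg_val].
HB.instance Definition _ := [Choice of amalg by <:].
HB.instance Definition _ :=
  GRing.SubChoice_isSubNzRing.Build (A * B)%type amalg_pred amalg amalg_subring_closed.

Definition fAJ_pred : {pred B} := [pred b : B | asbool (exists a : A, b - f a \in J)].

Lemma fAJ_subring_closed : subring_closed fAJ_pred.
Proof.
have e : forall x y, x \in J -> y \in J -> x + y \in J.
  move=> x y hx hy; rewrite -[y]opprK; apply: idealB => //.
  by rewrite -[- y]sub0r; apply: idealB => //; exact: ideal0.
split.
- by rewrite inE; apply/asboolP; exists 1; rewrite rmorph1 subrr ideal0.
- move=> x y; rewrite !inE => /asboolP [a h] /asboolP [a' h'].
  apply/asboolP; exists (a - a').
  have -> : x - y - f (a - a') = (x - f a) - (y - f a').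
    by rewrite rmorphB !opprB addrACA [RHS]addrACA [- f a + _]addrC.
  exact: idealB.
- move=> x y; rewrite !inE => /asboolP [a h] /asboolP [a' h'].
  apply/asboolP; exists (a * a').
  have -> : x * y - f (a * a') = (x - f a) * y + f a * (y - f a').
    by rewrite rmorphM mulrBl mulrBr addrA subrK.
  by apply: e; [apply: idealMr | apply: idealMl].
Qed.

Record fAJ := FAJ { fAJ_val : B; fAJ_valP : fAJ_val \in fAJ_pred }.
HB.instance Definition _ := [isSub for fAJ_val].
HB.instance Definition _ := [Choice of fAJ by <:].
HB.instance Definition _ :=
  GRing.SubChoice_isSubNzRing.Build B fAJ_pred fAJ fAJ_subring_closed.

End Amalgamation.

Arguments amalg {A B} f J.
Arguments fAJ {A B} f J.

(* Main.v *)
Require Import Defs.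
From HB Require Import structures.
From mathcomp Require Import all_boot all_order all_algebra.
Import GRing.Theory.
Local Open Scope ring_scope.
Set Implicit Arguments. Unset Strict Implicit.

Lemma nil_rmorph (R S : nzRingType) (g : {rmorphism R -> S}) (x : R) :
  nilpotent x -> nilpotent (g x).
Proof. by case=> n hn; exists n; rewrite -rmorphXn hn rmorph0. Qed.

Lemma pairX (A B : nzRingType) (u : (A * B)%type) n :
  u ^+ n = (u.1 ^+ n, u.2 ^+ n).
Proof.
case: u => a b; elim: n => [|n IH] //=.
by rewrite !exprS IH.
Qed.

Section Help.
Variables (A B : nzRingType) (f : {rmorphism A -> B}) (J : ideal B).

Lemma diag_in (a : A) : (a, f a) \in amalg_pred f J.
Proof. by rewrite inE /= subrr ideal0. Qed.

Definition diag (a : A) : amalg f J := Sub (a, f a) (diag_in a).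

Lemma diag_zmod : zmod_morphism diag.
Proof. by move=> x y; apply: val_inj; rewrite rmorphB !SubK /= rmorphB. Qed.
Lemma diag_monoid : monoid_morphism diag.
Proof.
split; first by apply: val_inj; rewrite rmorph1 SubK /= rmorph1.
by move=> x y; apply: val_inj; rewrite rmorphM !SubK /= rmorphM.
Qed.
HB.instance Definition _ := GRing.isZmodMorphism.Build A (amalg f J) diag diag_zmod.
HB.instance Definition _ := GRing.isMonoidMorphism.Build A (amalg f J) diag diag_monoid.

Lemma piC_in (x : amalg f J) : (val x).2 \in fAJ_pred f J.
Proof. by rewrite inE; apply/asboolP; exists (val x).1; have := valP x. Qed.

Definition piC (x : amalg f J) : fAJ f J := Sub (val x).2 (piC_in x).

Lemma piC_zmod : zmod_morphism piC.
Proof. by move=> x y; apply: val_inj; rewrite rmorphB !SubK rmorphB. Qed.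
Lemma piC_monoid : monoid_morphism piC.
Proof.
split; first by apply: val_inj; rewrite rmorph1 SubK rmorph1.
by move=> x y; apply: val_inj; rewrite rmorphM !SubK rmorphM.
Qed.
HB.instance Definition _ := GRing.isZmodMorphism.Build (amalg f J) (fAJ f J) piC piC_zmod.
HB.instance Definition _ := GRing.isMonoidMorphism.Build (amalg f J) (fAJ f J) piC piC_monoid.

Lemma nil_amalg (x : amalg f J) :
  nilpotent (val x).1 -> nilpotent (val x).2 -> nilpotent x.
Proof.
move=> [n hn] [m hm]; exists (n + m)%N; apply: val_inj.
rewrite rmorphXn rmorph0 pairX !exprD hn hm mul0r mulr0.
by [].
Qed.

Lemma nil_poly_map (R S : nzRingType) (g : {rmorphism R -> S}) (p q : {poly R}) :
  (forall k, nilpotent (p * q)`_k) ->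
  forall k, nilpotent (map_poly g p * map_poly g q)`_k.
Proof. by move=> h k; rewrite -rmorphM coef_map; apply: nil_rmorph. Qed.

End Help.

Section CPart.
Variables (A B : nzRingType) (f : {rmorphism A -> B}) (J : ideal B).
Variables (s : B) (sJ : s \in J) (sreg : regular_central s).

Lemma g_in (c : fAJ f J) : (0, s * val c) \in amalg_pred f J.
Proof. by rewrite inE /= rmorph0 subr0; exact: (Defs.idealMr _ sJ). Qed.
Definition g (c : fAJ f J) : amalg f J := Sub (0, s * val c) (g_in c).

Lemma h_in (c : fAJ f J) : (0, s * s * val c) \in amalg_pred f J.
Proof. by rewrite inE /= rmorph0 subr0 -mulrA; exact: (Defs.idealMr _ sJ). Qed.
Definition h (c : fAJ f J) : amalg f J := Sub (0, s * s * val c) (h_in c).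

Lemma valAD (u v : amalg f J) : val (u + v) = val u + val v.
Proof. exact: rmorphD. Qed.
Lemma valAM (u v : amalg f J) : val (u * v) = val u * val v.
Proof. exact: rmorphM. Qed.
Lemma valCD (u v : fAJ f J) : val (u + v) = val u + val v.
Proof. exact: rmorphD. Qed.
Lemma valCM (u v : fAJ f J) : val (u * v) = val u * val v.
Proof. exact: rmorphM. Qed.

Lemma valAX (u : amalg f J) n : val (u ^+ n) = val u ^+ n.
Proof. exact: rmorphXn. Qed.
Lemma valA0 : val (0 : amalg f J) = 0.
Proof. exact: rmorph0. Qed.
Lemma valCX (u : fAJ f J) n : val (u ^+ n) = val u ^+ n.
Proof. exact: rmorphXn. Qed.
Lemma valC0 : val (0 : fAJ f J) = 0.
Proof. exact: rmorph0. Qed.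

Lemma gE c : val (g c) = (0, s * val c).
Proof. exact: SubK. Qed.
Lemma hE c : val (h c) = (0, s * s * val c).
Proof. exact: SubK. Qed.

Lemma g0 : g 0 = 0.
Proof. by apply: val_inj; rewrite gE rmorph0 mulr0. Qed.
Lemma h0 : h 0 = 0.
Proof. by apply: val_inj; rewrite hE rmorph0 mulr0. Qed.
Lemma hD x y : h (x + y) = h x + h y.
Proof.
apply: val_inj; rewrite valAD !hE valCD mulrDr /=.
by apply: injective_projections => /=; rewrite ?addr0.
Qed.
Lemma gM x y : g x * g y = h (x * y).
Proof.
have hc := sreg.1.
apply: val_inj; rewrite valAM !gE hE valCM; apply: injective_projections => /=; first by rewrite mulr0.
rewrite -!mulrA; congr (_ * _); by rewrite !mulrA (hc (val x)).
Qed.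

Lemma sX_reg m b : (s * s) ^+ m * b = 0 -> b = 0.
Proof.
case: sreg => _ [hl _].
elim: m b => [|m IH] b; first by rewrite expr0 mul1r.
by rewrite exprS -!mulrA => /hl /hl /IH.
Qed.

Lemma comm_ss b : GRing.comm (s * s) b.
Proof. by rewrite /GRing.comm -mulrA (sreg.1 b) mulrA (sreg.1 b) -mulrA. Qed.

Lemma h_nil x : nilpotent x -> nilpotent (h x).
Proof.
case=> n hn; exists n.+1; apply: val_inj.
rewrite valAX valA0 hE pairX /= expr0n /=.
rewrite exprMn_comm; last exact: comm_ss.
by rewrite -valCX [x ^+ _]exprS hn mulr0 valC0 mulr0.
Qed.

Lemma h_nil_inv x : nilpotent (h x) -> nilpotent x.
Proof.
case=> n /(congr1 (fun u => (val u).2)).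
rewrite valAX valA0 hE pairX /= exprMn_comm; last exact: comm_ss.
move=> /sX_reg hv; exists n; apply: val_inj; by rewrite valCX hv valC0.
Qed.

Lemma CPart : nil_armendariz (amalg f J) -> nil_armendariz (fAJ f J).
Proof.
move=> hR p q hpq i j.
pose P := map_poly g p; pose Q := map_poly g q.
have cP k : P`_k = g p`_k by rewrite coef_map_id0 // g0.
have cQ k : Q`_k = g q`_k by rewrite coef_map_id0 // g0.
have hPQ k : nilpotent (P * Q)`_k.
  have -> : (P * Q)`_k = h (p * q)`_k.
    rewrite !coefM (big_morph h hD h0); apply: eq_bigr => l _.
    by rewrite cP cQ gM.
  exact: h_nil.
by apply: h_nil_inv; rewrite -gM -cP -cQ; apply: hR.
Qed.
End CPart.

Theorem theorem3p1 (A B : nzRingType) (f : {rmorphism A -> B}) (J : ideal B)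
  (J_proper : exists b : B, b \notin J)
  (J_meets_S : exists s : B, s \in J /\ regular_central s) :
  nil_armendariz (amalg f J) <-> nil_armendariz A /\ nil_armendariz (fAJ f J).
Proof.
pose piA := (fst \o val : amalg f J -> A) : {rmorphism amalg f J -> A}.
split.
- move=> hR; split.
  + move=> p q hpq i j.
    have := hR _ _ (nil_poly_map (diag f J) hpq) i j.
    rewrite !coef_map -rmorphM => /(nil_rmorph piA).
    by [].
  + by case: J_meets_S => s [sJ sreg]; apply: (CPart sJ sreg).
- case=> hA hC P Q hPQ i j.
  apply: nil_amalg.
  + have := hA _ _ (nil_poly_map piA hPQ) i j.
    by rewrite !coef_map -rmorphM.
  + have := hC _ _ (nil_poly_map (@piC _ _ f J) hPQ) i j.
    rewrite !coef_map -rmorphM => /(nil_rmorph (val : fAJ f J -> B)).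
    by [].
Qed.
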